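(* Assume (A1)–(A4) below. Then for any $s\in\mathcal S$ and policy $\pi$, the posterior variance of the value function $U_t^\pi(s)=\mathbb{V}_{\mathcal M\sim\Gamma_t}\big[V^{\pi,\mathcal M}(s)\big]$ satisfies $$U_t^\pi(s)=\mathbb{V}_{r\sim\Psi_t}\Big[\sum_a\pi(a\mid s)r(s,a)\Big]+\gamma^2u_t(s)+\gamma^2\sum_{a,s'}\pi(a\mid s)\bar p_t(s'\mid s,a)U_t^\pi(s'),$$ where $u_t(s)=\mathbb{V}_{a,s'\sim\pi,\bar p_t}\big[\bar V^\pi_t(s')\big]-\mathbb{E}_{\mathcal M\sim\Gamma_t}\Big[\mathbb{V}_{a,s'\sim\pi,p}\big[V^{\pi,\mathcal M}(s')\big]\Big]$.
   Context: Let $\mathcal S$ be a finite state space, $\mathcal A$ a finite action space and $\gamma\in[0,1)$ a discount factor. An MDP $\mathcal M$ here consists of a transition function $p$ (assigning to each $(s,a)$ a probability distribution $p(\cdot\mid s,a)$ on $\mathcal S$) and a bounded reward function $r:\mathcal S\times\mathcal A\to\mathbb R$; both are random: $\mathcal M\sim\Gamma_t$, with $p$ having marginal distribution $\Phi_t$ and $r$ having marginal distribution $\Psi_t$. A policy $\pi$ gives distributions $\pi(\cdot\mid s)$ on $\mathcal A$. The value function is $V^{\pi,\mathcal M}(s)=\mathbb E\big[\sum_{h\ge 0}\gamma^h r(s_h,a_h)\mid s_0=s\big]$ with $a_h\sim\pi(\cdot\mid s_h)$, $s_{h+1}\sim p(\cdot\mid s_h,a_h)$. Define $\bar p_t(s'\mid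 s,a)=\mathbb E_{p\sim\Phi_t}[p(s'\mid s,a)]$ and $\bar V^\pi_t(s)=\mathbb E_{\mathcal M\sim\Gamma_t}[V^{\pi,\mathcal M}(s)]$. For a transition function $q$ and function $f$ on $\mathcal S$, $\mathbb V_{a,s'\sim\pi,q}[f(s')]$ is the variance of $f(s')$ when $a\sim\pi(\cdot\mid s)$, $s'\sim q(\cdot\mid s,a)$. Assumptions: (A1) $p(s'\mid x,a)$ and $p(s'\mid y,a)$ are independent random variables if $x\neq y$; (A2) the MDP is a directed acyclic graph, i.e., states are not visited more than once in any given episode; (A3) $r(x,a)$ and $r(y,a)$ are independent random variables if $x\neq y$; (A4) the random variables $p(\cdot\mid s,a)$ and $r(s,a)$ are independent for any $(s,a)$.
   Formalization: Each p(·|s,a) is a sub-probability vector (missing mass ends the episode, value 0); (A1),(A3),(A4) become mutual independence of all blocks p(·|s,·) and r(s,·); (A2) becomes one rank on states, for all samples, rising along every p(s'|s,a) ≠ 0. Apart from conventions, each condition added here is assumed in the paper as well or is needed for the statement above to hold. *)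

(* Defs.v *)
From HB Require Import structures.
From mathcomp Require Import all_boot all_order all_algebra.
From mathcomp Require Import all_classical all_reals all_analysis.
Set Implicit Arguments. Unset Strict Implicit. Unset Printing Implicit Defensive.
Import Order.TTheory GRing.Theory Num.Theory.
Import numFieldNormedType.Exports.
Local Open Scope classical_set_scope.
Local Open Scope ring_scope.

Section rl.
Context {R : realType} {S A : finType} {Omega : Type}.

(* A (sampled) transition function: q s a s' = q(s' | s, a).
   A reward function: rw s a = r(s,a).  A policy: pi s a = pi(a | s). *)

Definition step_expect (pi : S -> A -> R) (q : S -> A -> S -> R)
  (f : S -> R) (s : S) : R :=
  \sum_(a : A) pi s a * \sum_(s' : S) q s a s' * f s'.

Definition pol_reward (pi : S -> A -> R) (rw : S -> A -> R) (s : S) : R :=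
  \sum_(a : A) pi s a * rw s a.

(* V^{pi,M}(s) = sum_h gamma^h E[r(s_h,a_h) | s_0 = s]; the expected reward at
   step h is the h-fold iterate of the one-step expectation operator applied
   to the expected immediate reward. *)
Definition value (gamma : R) (pi : S -> A -> R) (q : S -> A -> S -> R)
  (rw : S -> A -> R) (s : S) : R :=
  limn (series (fun h : nat =>
    gamma ^+ h * iter h (step_expect pi q) (pol_reward pi rw) s)).

Definition step_var (pi : S -> A -> R) (q : S -> A -> S -> R)
  (f : S -> R) (s : S) : R :=
  step_expect pi q (fun s' => f s' ^+ 2) s - (step_expect pi q f s) ^+ 2.

End rl.

Section indep.
Context {d : measure_display} {Omega : measurableType d} {R : realType}
  {S A : finType}.

Definition trans_event (p : Omega -> S -> A -> S -> R)
  (B : S -> A -> S -> set R) (s : S) : set Omega :=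
  [set w | forall a s', B s a s' (p w s a s')].

Definition rew_event (r : Omega -> S -> A -> R)
  (B : S -> A -> set R) (s : S) : set Omega :=
  [set w | forall a, B s a (r w s a)].

(* Mutual independence of the 2|S| random vectors
   p(.|s,.) (s in S) and r(s,.) (s in S): product rule on the generating
   pi-system of measurable rectangles (taking B = setT drops a block). *)
Definition indep_blocks (P : probability Omega R)
  (p : Omega -> S -> A -> S -> R) (r : Omega -> S -> A -> R) : Prop :=
  forall (Bp : S -> A -> S -> set R) (Br : S -> A -> set R),
    (forall s a s', measurable (Bp s a s')) ->
    (forall s a, measurable (Br s a)) ->
    P [set w | forall s, trans_event p Bp s w /\ rew_event r Br s w] =
    (\prod_(s : S) (P (trans_event p Bp s) * P (rew_event r Br s)))%E.

End indep.

(* Main.v *)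
Require Import Defs.
From HB Require Import structures.
From mathcomp Require Import all_boot all_order all_algebra.
From mathcomp Require Import all_classical all_reals all_analysis.
From mathcomp Require Import measurable_realfun.
From mathcomp Require Import ring lra.
Import Order.TTheory GRing.Theory Num.Theory.
Import numFieldNormedType.Exports.
Local Open Scope classical_set_scope.
Local Open Scope ring_scope.
Set Implicit Arguments. Unset Strict Implicit. Unset Printing Implicit Defensive.
Section Expect.
Context {R : realType} {d : measure_display} {T : measurableType d}
  (P : probability T R).

Definition bm (f : T -> R) :=
  measurable_fun setT f /\ exists M : R, forall w, `|f w| <= M.

Definition Ex (f : T -> R) : R := fine (\int[P]_w (f w)%:E)%E.

Lemma bm_int f : bm f -> P.-integrable setT (EFin \o f).
Proof.
move=> [mf [M hM]]; apply: measurable_bounded_integrable => //.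
  by apply: (le_lt_trans (probability_le1 _ _)) => //; exact: ltry.
exists M; split; first by rewrite num_real.
by move=> M' MM' x _ /=; rewrite (le_trans (hM x))// ltW.
Qed.

Lemma Ex_int f : bm f -> (\int[P]_w (f w)%:E = (Ex f)%:E)%E.
Proof. by move=> /bm_int hf; rewrite /Ex fineK// integrable_fin_num. Qed.

Lemma bm_cst c : bm (fun _ => c).
Proof. by split; [exact: measurable_cst | exists `|c|]. Qed.

Lemma bmD f g : bm f -> bm g -> bm (fun w => f w + g w).
Proof.
move=> [mf [M hM]] [mg [N hN]]; split; first exact: measurable_funD.
by exists (M + N) => w; rewrite (le_trans (ler_normD _ _))// lerD.
Qed.

Lemma bmM f g : bm f -> bm g -> bm (fun w => f w * g w).
Proof.
move=> [mf [M hM]] [mg [N hN]]; split; first exact: measurable_funM.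
exists (M * N) => w; rewrite normrM ler_pM//.
Qed.

Lemma bmN f : bm f -> bm (fun w => - f w).
Proof.
move=> hf; have -> : (fun w => - f w) = (fun w => (-1) * f w).
  by apply: funext => w; rewrite mulN1r.
exact: bmM (bm_cst _) hf.
Qed.

Lemma bmB f g : bm f -> bm g -> bm (fun w => f w - g w).
Proof. by move=> hf hg; apply: bmD => //; exact: bmN. Qed.

Lemma bm_sum (I : Type) (s : seq I) (Q : pred I) (F : I -> T -> R) :
  (forall i, bm (F i)) -> bm (fun w => \sum_(i <- s | Q i) F i w).
Proof.
move=> hF; elim: s => [|i s IH].
  by under eq_fun do rewrite big_nil; exact: bm_cst.
under eq_fun do rewrite big_cons; case: (Q i) => //; exact: bmD.
Qed.

Lemma eq_Ex f g : (forall w, f w = g w) -> Ex f = Ex g.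
Proof. by move=> h; rewrite (funext h). Qed.

Lemma ExD f g : bm f -> bm g -> Ex (fun w => f w + g w) = Ex f + Ex g.
Proof.
move=> hf hg; apply: EFin_inj; rewrite -Ex_int; last exact: bmD.
by rewrite EFinD -!Ex_int// -integralD_EFin//; exact: bm_int.
Qed.

Lemma ExZ c f : bm f -> Ex (fun w => c * f w) = c * Ex f.
Proof.
move=> hf; apply: EFin_inj; rewrite -Ex_int; last exact: bmM (bm_cst c) hf.
rewrite EFinM -Ex_int// -integralZl//; exact: bm_int.
Qed.

Lemma Ex_cst c : Ex (fun _ => c) = c.
Proof.
apply: EFin_inj; rewrite -Ex_int; last exact: bm_cst.
rewrite integral_cst//.
transitivity (c%:E * 1)%E; last by rewrite mule1.
congr (_ * _)%E; exact: probability_setT.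
Qed.

Lemma ExN f : bm f -> Ex (fun w => - f w) = - Ex f.
Proof.
move=> hf; rewrite -mulN1r -ExZ//; apply: eq_Ex => w; by rewrite mulN1r.
Qed.

Lemma ExB f g : bm f -> bm g -> Ex (fun w => f w - g w) = Ex f - Ex g.
Proof. by move=> hf hg; rewrite ExD ?ExN//; exact: bmN. Qed.

Lemma Ex_sum (I : Type) (s : seq I) (Q : pred I) (F : I -> T -> R) :
  (forall i, bm (F i)) ->
  Ex (fun w => \sum_(i <- s | Q i) F i w) = \sum_(i <- s | Q i) Ex (F i).
Proof.
move=> hF; elim: s => [|i s IH].
  by rewrite big_nil; under eq_Ex do rewrite big_nil; exact: Ex_cst.
rewrite big_cons; case: ifP => Qi.
  rewrite -IH -ExD//; last exact: bm_sum.
  by apply: eq_Ex => w; rewrite big_cons Qi.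
by rewrite -IH; apply: eq_Ex => w; rewrite big_cons Qi.
Qed.

Lemma Ex_le f g : bm f -> bm g -> (forall w, f w <= g w) -> Ex f <= Ex g.
Proof.
move=> hf hg fg; rewrite -lee_fin -!Ex_int//.
by apply: le_integral => //; [exact: bm_int | exact: bm_int | move=> w _; rewrite lee_fin].
Qed.

Lemma Ex_abs_le f e : bm f -> (forall w, `|f w| <= e) -> `|Ex f| <= e.
Proof.
move=> hf he; rewrite ler_norml; apply/andP; split.
  rewrite -[X in X <= _](Ex_cst (- e)); apply: Ex_le => //; first exact: bm_cst.
  by move=> w; have := he w; rewrite ler_norml => /andP[].
rewrite -[X in _ <= X](Ex_cst e); apply: Ex_le => //; first exact: bm_cst.
by move=> w; have := he w; rewrite ler_norml => /andP[].
Qed.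

Lemma bm_indic (A : set T) : measurable A -> bm (\1_A : T -> R).
Proof.
move=> mA; split; first exact: measurable_indic.
by exists 1 => w; rewrite /indic; case: (w \in A); rewrite ?normr1 ?normr0.
Qed.

Lemma Ex_indic (A : set T) : measurable A -> Ex (\1_A) = fine (P A).
Proof. by move=> mA; rewrite /Ex integral_indic// setIT. Qed.

Lemma expectation_Ex f : bm f -> ('E_P[f] = (Ex f)%:E)%E.
Proof. by move=> hf; rewrite unlock Ex_int. Qed.

Lemma variance_Ex f : bm f ->
  ('V_P[f] = (Ex (fun w => f w ^+ 2) - (Ex f) ^+ 2)%:E)%E.
Proof.
move=> hf; rewrite /variance covariance.unlock (expectation_Ex hf)/=.
have h1 : bm (fun w => (f w - Ex f) * (f w - Ex f)).
  by apply: bmM; apply: bmB => //; exact: bm_cst.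
rewrite expectation_Ex//; congr (_%:E).
rewrite (@eq_Ex _ (fun w => f w ^+ 2 + (- (2 * Ex f) * f w + Ex f ^+ 2))); last first.
  by move=> w; change ((f w - Ex f) * (f w - Ex f) = f w ^+ 2 + (- (2 * Ex f) * f w + Ex f ^+ 2)); ring.
have hf2 : bm (fun w => f w ^+ 2) by apply: bmM.
rewrite ExD//; last by apply: bmD; [apply: bmM => //; exact: bm_cst | exact: bm_cst].
rewrite ExD//; [|apply: bmM => //; exact: bm_cst|exact: bm_cst].
by rewrite ExZ// Ex_cst; ring.
Qed.

End Expect.
Section Grid.
Context {R : realType}.
Variables (C h : R).
Hypotheses (C0 : 0 < C) (h0 : 0 < h).

Definition gN : nat := Num.truncn (2 * C / h).
Definition ga (j : nat) : R := - C + j%:R * h.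
Definition gI (j : nat) : set R := [set x | ga j <= x < ga j + h].
Definition gidx (x : R) : 'I_gN.+1 := inord (Num.truncn ((x + C) / h)).

Lemma gidx_val x : `|x| <= C -> (gidx x : nat) = Num.truncn ((x + C) / h).
Proof.
move=> hx; rewrite /gidx inordK// ltnS /gN le_truncn//.
rewrite ler_pM2r ?invr_gt0//; move: hx; rewrite ler_norml => /andP[_ ?]; lra.
Qed.

Lemma gidx_in x : `|x| <= C -> gI (gidx x) x.
Proof.
move=> hx; rewrite /gI /ga /= gidx_val//.
have y0 : 0 <= (x + C) / h.
  by apply: divr_ge0; [move: hx; rewrite ler_norml => /andP[? _]; lra | exact: ltW].
have /andP[t1 t2] := truncn_itv y0.
set j := Num.truncn _ in t1 t2 *.
have e : x = - C + (x + C) / h * h by rewrite divfK ?gt_eqF//; ring.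
apply/andP; split.
  by rewrite [X in _ <= X]e lerD2l ler_pM2r.
rewrite [X in X < _]e -addrA ltrD2l.
rewrite (_ : j%:R * h + h = (j%:R + 1) * h); last by ring.
by rewrite ltr_pM2r// natr1.
Qed.

Lemma gidx_uniq x (j : 'I_gN.+1) : gI j x -> gidx x = j.
Proof.
rewrite /gI /ga /= => /andP[t1 t2]; apply: val_inj => /=.
rewrite /gidx.
have -> : Num.truncn ((x + C) / h) = j.
  apply: truncn_def; apply/andP; split.
    by rewrite ler_pdivlMr//; lra.
  by rewrite ltr_pdivrMr// -natr1; lra.
by rewrite inordK.
Qed.

Lemma ga_props x : `|x| <= C ->
  `|x - ga (gidx x)| <= h /\ `|ga (gidx x)| <= C.
Proof.
move=> hx; have /andP[t1 t2] := gidx_in hx.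
have gj : 0 <= (gidx x)%:R * h by apply: mulr_ge0 => //; exact: ltW.
move: hx; rewrite !ler_norml /ga in t1 t2 * => /andP[? ?].
split; apply/andP; split; lra.
Qed.

End Grid.

Section KPL.
Context {R : realType} {d : measure_display} {T : measurableType d}
  (P : probability T R) {K : finType}.
Variables (Z : T -> K -> R) (C : R).
Hypotheses (C0 : 0 < C) (Zbox : forall w k, `|Z w k| <= C)
  (mZ : forall k, measurable_fun setT (fun w => Z w k)).

Definition evD (Q : pred K) (B : K -> set R) : set T :=
  [set w | forall k, Q k -> B k (Z w k)].

Lemma evD_meas (Q : pred K) (B : K -> set R) : (forall k, measurable (B k)) -> measurable (evD Q B).
Proof.
move=> mB.
suff H : forall s : seq K,
    measurable [set w | forall k, k \in s -> Q k -> B k (Z w k)].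
  rewrite (_ : evD Q B = [set w | forall k, k \in enum K -> Q k -> B k (Z w k)]).
    exact: H.
  by apply/seteqP; split => w /= Hw k; [move=> _; exact: Hw | apply: Hw; rewrite mem_enum].
elim=> [|k s IH].
  rewrite (_ : [set w | _] = setT); first exact: measurableT.
  by apply/seteqP; split => w //= _ k; rewrite in_nil.
rewrite (_ : [set w | _] = [set w | Q k -> B k (Z w k)] `&`
    [set w | forall k0, k0 \in s -> Q k0 -> B k0 (Z w k0)]).
  apply: measurableI => //; case: (Q k).
    rewrite (_ : [set w | true -> _] = (fun w => Z w k) @^-1` B k).
      by have := mZ k measurableT (mB k); rewrite setTI.
    by apply/seteqP; split => w /=; [apply | move=> ? ?].
  rewrite (_ : [set w | false -> _] = setT); first exact: measurableT.
  by apply/seteqP; split => w //=.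
apply/seteqP; split => w /=.
  move=> Hw; split; first by apply: Hw; rewrite mem_head.
  by move=> k0 k0s; apply: Hw; rewrite in_cons k0s orbT.
by move=> [H1 H2] k0; rewrite in_cons => /orP[/eqP->//|]; exact: H2.
Qed.

Definition inbox (z : K -> R) := forall k, `|z k| <= C.

Definition Lip (Q : pred K) (f : (K -> R) -> R) :=
  (forall z z', (forall k, Q k -> z k = z' k) -> f z = f z') /\
  exists c, 0 <= c /\ forall z z' e, 0 <= e -> inbox z -> inbox z' ->
    (forall k, `|z k - z' k| <= e) -> `|f z - f z'| <= c * e.

Lemma Lip_bound (Q : pred K) (f : (K -> R) -> R) : Lip Q f -> exists B, 0 <= B /\ forall z, inbox z -> `|f z| <= B.
Proof.
move=> [_ [c [c0 hc]]]; exists (`|f (fun _ => 0)| + c * C); split.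
  by apply: addr_ge0 => //; apply: mulr_ge0 => //; exact: ltW.
move=> z hz; have := hc z (fun _ => 0) C (ltW C0) hz.
have h0 : inbox (fun _ => 0) by move=> k; rewrite normr0 ltW.
have hd : forall k, `|z k - (fun _ => 0) k| <= C by move=> k; rewrite subr0; exact: hz.
move=> /(_ h0 hd) H.
rewrite -(subrK (f (fun _ => 0)) (f z)) (le_trans (ler_normD _ _))//.
by rewrite addrC lerD2l.
Qed.

Variable D : pred K.
Hypothesis indepD : forall B B' : K -> set R,
  (forall k, measurable (B k)) -> (forall k, measurable (B' k)) ->
  fine (P (evD D B `&` evD (predC D) B')) =
  fine (P (evD D B)) * fine (P (evD (predC D) B')).

Section h.
Variable h : R.
Hypothesis h0 : 0 < h.

Definition Fn (Q : pred K) (f : (K -> R) -> R) (w : T) : R :=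
  \sum_(σ : {ffun K -> 'I_(gN C h).+1} | [forall k, ~~ Q k ==> (σ k == ord0)])
    f (fun k => ga C h (σ k)) * \1_(evD Q (fun k => gI C h (σ k))) w.

Lemma gI_meas (j : nat) : measurable (gI C h j).
Proof.
rewrite (_ : gI C h j = `[ga C h j, ga C h j + h[%classic); first exact: measurable_itv.
by apply/seteqP; split => x /=; rewrite in_itv.
Qed.

Lemma Fn_eq (Q : pred K) (f : (K -> R) -> R) (w : T) : (forall z z', (forall k, Q k -> z k = z' k) -> f z = f z') ->
  Fn Q f w = f (fun k => if Q k then ga C h (gidx C h (Z w k)) else Z w k).
Proof.
move=> fdep; rewrite /Fn.
pose sw := [ffun k => if Q k then gidx C h (Z w k) else ord0].
have swQ : [forall k, ~~ Q k ==> (sw k == ord0)].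
  by apply/forallP => k; rewrite ffunE; case: (Q k).
rewrite (bigD1 sw swQ) /= big1 ?addr0.
  rewrite /indic mem_set ?mulr1.
    apply: fdep => k Qk; by rewrite ffunE Qk.
  move=> k Qk; rewrite ffunE Qk; exact: gidx_in.
move=> σ /andP[σQ nσ]; rewrite /indic memNset ?mulr0//.
move=> Hw; move/negP: nσ; apply; apply/eqP/ffunP => k; rewrite ffunE.
case: (boolP (Q k)) => Qk.
  by rewrite (gidx_uniq h0 (Hw k Qk)).
by move/forallP: σQ => /(_ k); rewrite Qk /= => /eqP.
Qed.

Lemma bm_Fn (Q : pred K) (f : (K -> R) -> R) : bm (Fn Q f).
Proof.
apply: bm_sum => σ; apply: bmM; first exact: bm_cst.
apply: bm_indic; apply: evD_meas => k; exact: gI_meas.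
Qed.

Lemma Ex_Fn (Q : pred K) (f : (K -> R) -> R) : Ex P (Fn Q f) =
  \sum_(σ : {ffun K -> 'I_(gN C h).+1} | [forall k, ~~ Q k ==> (σ k == ord0)])
    f (fun k => ga C h (σ k)) * fine (P (evD Q (fun k => gI C h (σ k)))).
Proof.
rewrite /Fn Ex_sum; last first.
  move=> σ; apply: bmM; first exact: bm_cst.
  apply: bm_indic; apply: evD_meas => k; exact: gI_meas.
apply: eq_bigr => σ _; rewrite ExZ ?Ex_indic//.
  apply: evD_meas => k; exact: gI_meas.
apply: bm_indic; apply: evD_meas => k; exact: gI_meas.
Qed.

Lemma Ex_FnFn (f g : (K -> R) -> R) : Ex P (fun w => Fn D f w * Fn (predC D) g w) =
  Ex P (Fn D f) * Ex P (Fn (predC D) g).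
Proof.
rewrite !Ex_Fn big_distrl /=.
under eq_bigr do rewrite big_distrr /=.
rewrite (@eq_Ex _ _ _ _ _ (fun w =>
   \sum_(σ : {ffun K -> 'I_(gN C h).+1} | [forall k, ~~ D k ==> (σ k == ord0)])
   \sum_(τ : {ffun K -> 'I_(gN C h).+1} | [forall k, ~~ (predC D) k ==> (τ k == ord0)])
    (f (fun k => ga C h (σ k)) * g (fun k => ga C h (τ k))) *
     \1_(evD D (fun k => gI C h (σ k)) `&` evD (predC D) (fun k => gI C h (τ k))) w)).
  rewrite Ex_sum; last first.
    move=> σ; apply: bm_sum => τ; apply: bmM; first exact: bm_cst.
    by apply: bm_indic; apply: measurableI; apply: evD_meas => k; exact: gI_meas.
  apply: eq_bigr => σ _; rewrite Ex_sum; last first.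
    move=> τ; apply: bmM; first exact: bm_cst.
    by apply: bm_indic; apply: measurableI; apply: evD_meas => k; exact: gI_meas.
  apply: eq_bigr => τ _; rewrite ExZ; last first.
    by apply: bm_indic; apply: measurableI; apply: evD_meas => k; exact: gI_meas.
  rewrite Ex_indic; last by apply: measurableI; apply: evD_meas => k; exact: gI_meas.
  rewrite indepD; [ring | move=> k; exact: gI_meas | move=> k; exact: gI_meas].
move=> w; rewrite /Fn big_distrl /=; apply: eq_bigr => σ _.
rewrite big_distrr /=; apply: eq_bigr => τ _.
rewrite indicI /=; ring.
Qed.

End h.

Lemma small0 (x Kc : R) : 0 <= Kc -> (forall h, 0 < h -> `|x| <= Kc * h) -> x = 0.
Proof.
move=> K0 H; apply/eqP; apply/negPn/negP => x0.
have ax : 0 < `|x| by rewrite normr_gt0.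
pose h := `|x| / (Kc + 1).
have hp : 0 < h by apply: divr_gt0 => //; lra.
have e : h * (Kc + 1) = `|x| by rewrite /h divfK// gt_eqF//; lra.
have := H h hp; nra.
Qed.

Lemma KPL (f g : (K -> R) -> R) : Lip D f -> Lip (predC D) g ->
  measurable_fun setT (fun w => f (Z w)) -> measurable_fun setT (fun w => g (Z w)) ->
  Ex P (fun w => f (Z w) * g (Z w)) = Ex P (fun w => f (Z w)) * Ex P (fun w => g (Z w)).
Proof.
move=> Lf Lg mf mg.
have [Bf [Bf0 hBf]] := Lip_bound Lf.
have [Bg [Bg0 hBg]] := Lip_bound Lg.
have [fdep [cf [cf0 hcf]]] := Lf.
have [gdep [cg [cg0 hcg]]] := Lg.
have Zb : forall w, inbox (Z w) by move=> w k; exact: Zbox.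
have bF : bm (fun w => f (Z w)) by split => //; exists Bf => w; exact: hBf.
have bG : bm (fun w => g (Z w)) by split => //; exists Bg => w; exact: hBg.
apply/eqP; rewrite -subr_eq0; apply/eqP.
apply: (@small0 _ (2 * (Bf * cg + Bg * cf))).
  by apply: mulr_ge0 => //; apply: addr_ge0; apply: mulr_ge0.
move=> h h0.
have rnd : forall (Q : pred K) (ff : (K -> R) -> R) cc,
    (forall z z', (forall k, Q k -> z k = z' k) -> ff z = ff z') ->
    (forall z z' e, 0 <= e -> inbox z -> inbox z' ->
      (forall k, `|z k - z' k| <= e) -> `|ff z - ff z'| <= cc * e) ->
    forall w, `|ff (Z w) - Fn h Q ff w| <= cc * h /\
      (forall B, (forall z, inbox z -> `|ff z| <= B) -> `|Fn h Q ff w| <= B).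
  move=> Q ff cc dep lip w; rewrite Fn_eq//.
  set z' := (fun k => _).
  have bz' : inbox z'.
    move=> k; rewrite /z'; case: (Q k) => //. exact: (ga_props h0 (Zbox w k)).2.
  split; last by move=> B hB; exact: hB.
  apply: lip => //; first exact: ltW.
  move=> k; rewrite /z'; case: (Q k).
    exact: (ga_props h0 (Zbox w k)).1.
  by rewrite subrr normr0 ltW.
have bFn : bm (Fn h D f) by exact: bm_Fn.
have bGn : bm (Fn h (predC D) g) by exact: bm_Fn.
have e1 : `|Ex P (fun w => f (Z w) * g (Z w)) - Ex P (fun w => Fn h D f w * Fn h (predC D) g w)|
     <= (Bf * cg + Bg * cf) * h.
  rewrite -ExB; [|exact: bmM|exact: bmM].
  apply: Ex_abs_le; first by apply: bmB; exact: bmM.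
  move=> w.
  have [r1 r2] := rnd _ _ _ fdep hcf w.
  have [r3 r4] := rnd _ _ _ gdep hcg w.
  have r5 := r4 _ hBg.
  have r6 := hBf _ (Zb w).
  rewrite (_ : _ - _ = f (Z w) * (g (Z w) - Fn h (predC D) g w) +
      Fn h (predC D) g w * (f (Z w) - Fn h D f w)); last by ring.
  rewrite (le_trans (ler_normD _ _))// !normrM mulrDl lerD//.
    by rewrite -mulrA ler_pM// mulr_ge0// ltW.
  by rewrite -mulrA ler_pM// mulr_ge0// ltW.
have e2 : `|Ex P (Fn h D f) * Ex P (Fn h (predC D) g) -
    Ex P (fun w => f (Z w)) * Ex P (fun w => g (Z w))| <= (Bf * cg + Bg * cf) * h.
  have a1 : `|Ex P (Fn h D f)| <= Bf.
    by apply: Ex_abs_le => // w; exact: (rnd _ _ _ fdep hcf w).2.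
  have a2 : `|Ex P (fun w => g (Z w))| <= Bg by apply: Ex_abs_le => // w; exact: hBg.
  have a3 : `|Ex P (Fn h (predC D) g) - Ex P (fun w => g (Z w))| <= cg * h.
    rewrite -ExB//; apply: Ex_abs_le; first exact: bmB.
    by move=> w; rewrite distrC; exact: (rnd _ _ _ gdep hcg w).1.
  have a4 : `|Ex P (Fn h D f) - Ex P (fun w => f (Z w))| <= cf * h.
    rewrite -ExB//; apply: Ex_abs_le; first exact: bmB.
    by move=> w; rewrite distrC; exact: (rnd _ _ _ fdep hcf w).1.
  rewrite (_ : _ - _ = Ex P (Fn h D f) * (Ex P (Fn h (predC D) g) - Ex P (fun w => g (Z w)))
     + Ex P (fun w => g (Z w)) * (Ex P (Fn h D f) - Ex P (fun w => f (Z w)))); last by ring.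
  rewrite (le_trans (ler_normD _ _))// !normrM mulrDl lerD//.
    by rewrite -mulrA ler_pM// mulr_ge0// ltW.
  by rewrite -mulrA ler_pM// mulr_ge0// ltW.
rewrite Ex_FnFn// in e1.
set x1 := Ex P (fun w => f (Z w) * g (Z w)) in e1 *.
set x2 := Ex P (Fn h D f) * Ex P (Fn h (predC D) g) in e1 e2 *.
set x3 := Ex P (fun w => f (Z w)) * Ex P (fun w => g (Z w)) in e2 *.
rewrite (_ : x1 - x3 = (x1 - x2) + (x2 - x3)); last by ring.
rewrite (le_trans (ler_normD _ _))//.
rewrite (_ : 2 * _ * h = (Bf * cg + Bg * cf) * h + (Bf * cg + Bg * cf) * h); last by ring.
exact: lerD.
Qed.

End KPL.
Section Poly.
Context {R : realType} {d : measure_display} {T : measurableType d} {K : finType}.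
Variable C : R.
Hypothesis C0 : 0 < C.

Definition MF (f : (K -> R) -> R) := forall Y : T -> K -> R,
  (forall k, measurable_fun setT (fun w => Y w k)) ->
  measurable_fun setT (fun w => f (Y w)).

Definition Poly (Q : pred K) (f : (K -> R) -> R) := Lip C Q f /\ MF f.

Lemma Poly_weaken (Q Q' : pred K) f : (forall k, Q k -> Q' k) -> Poly Q f -> Poly Q' f.
Proof.
move=> QQ [[dep hc] mf]; split => //; split => // z z' H; apply: dep => k Qk.
exact/H/QQ.
Qed.

Lemma Poly_cst Q (c : R) : Poly Q (fun _ => c).
Proof.
split; last by move=> Y _; exact: measurable_cst.
split => //; exists 0; split => // z z' e e0 _ _ _; by rewrite subrr normr0 mul0r.
Qed.

Lemma Poly_coord (Q : pred K) k : Q k -> Poly Q (fun z => z k).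
Proof.
move=> Qk; split; last by move=> Y mY; exact: mY.
split; first by move=> z z' H; exact: H.
by exists 1; split => // z z' e _ _ _ H; rewrite mul1r.
Qed.

Lemma Poly_add Q f g : Poly Q f -> Poly Q g -> Poly Q (fun z => f z + g z).
Proof.
move=> [[df [cf [cf0 hf]]] mf] [[dg [cg [cg0 hg]]] mg]; split; last first.
  by move=> Y mY; apply: measurable_funD; [exact: mf | exact: mg].
split; first by move=> z z' H; rewrite (df _ _ H) (dg _ _ H).
exists (cf + cg); split; first exact: addr_ge0.
move=> z z' e e0 bz bz' H.
rewrite (_ : _ - _ = (f z - f z') + (g z - g z')); last by ring.
by rewrite (le_trans (ler_normD _ _))// mulrDl lerD// ?hf ?hg.
Qed.

Lemma Poly_mul Q f g : Poly Q f -> Poly Q g -> Poly Q (fun z => f z * g z).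
Proof.
move=> [Lf mf] [Lg mg]; split; last first.
  by move=> Y mY; apply: measurable_funM; [exact: mf | exact: mg].
have [Bf [Bf0 hBf]] := Lip_bound C0 Lf.
have [Bg [Bg0 hBg]] := Lip_bound C0 Lg.
move: Lf Lg => [df [cf [cf0 hf]]] [dg [cg [cg0 hg]]].
split; first by move=> z z' H; rewrite (df _ _ H) (dg _ _ H).
exists (Bf * cg + Bg * cf); split; first by apply: addr_ge0; apply: mulr_ge0.
move=> z z' e e0 bz bz' H.
rewrite (_ : _ - _ = f z * (g z - g z') + g z' * (f z - f z')); last by ring.
rewrite (le_trans (ler_normD _ _))// !normrM mulrDl lerD//.
  by rewrite -mulrA ler_pM// ?hBf ?hg.
by rewrite -mulrA ler_pM// ?hBg ?hf.
Qed.

Lemma Poly_sum (I : Type) (s : seq I) Q (F : I -> (K -> R) -> R) :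
  (forall i, Poly Q (F i)) -> Poly Q (fun z => \sum_(i <- s) F i z).
Proof.
move=> hF; elim: s => [|i s IH].
  have -> : (fun z => \sum_(i <- [::]) F i z) = (fun _ => 0).
    by apply: funext => z; rewrite big_nil.
  exact: Poly_cst.
have -> : (fun z => \sum_(j <- i :: s) F j z) = (fun z => F i z + \sum_(j <- s) F j z).
  by apply: funext => z; rewrite big_cons.
exact: Poly_add.
Qed.

Lemma Poly_trunc (hi : pred K) Q f : Poly Q f ->
  Poly hi (fun z => f (fun k => if hi k then z k else 0)).
Proof.
move=> [[df [cf [cf0 hf]]] mf]; split; last first.
  move=> Y mY; apply: (mf (fun w k => if hi k then Y w k else 0)) => k.
  by case: (hi k) => //; exact: measurable_cst.
split.
  move=> z z' H; congr f; apply: funext => k.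
  by case: (boolP (hi k)) => // /H.
exists cf; split => // z z' e e0 bz bz' H; apply: hf => // k.
- by case: (hi k) => //; rewrite normr0 ltW.
- by case: (hi k) => //; rewrite normr0 ltW.
- by case: (hi k) => //; rewrite subrr normr0.
Qed.

End Poly.
Section MDP.
Context {R : realType} {S A : finType}.
Variables (gamma : R) (pi : S -> A -> R) (rank : S -> nat).

Definition dag (q : S -> A -> S -> R) :=
  forall s a s', q s a s' != 0 -> (rank s < rank s')%N.

Definition itv (q : S -> A -> S -> R) (rw : S -> A -> R) h :=
  iter h (step_expect pi q) (pol_reward pi rw).

Definition vfn q rw t := \sum_(h < #|S|) gamma ^+ h * itv q rw h t.

Definition mS (t : S) := #|[pred t' | (rank t < rank t')%N]|.

Lemma mS_lt t t' : (rank t < rank t')%N -> (mS t' < mS t)%N.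
Proof.
move=> tt'; apply: proper_card; apply/fintype.properP; split.
  by apply/fintype.subsetP => x; rewrite !inE => /(ltn_trans tt').
by exists t'; rewrite !inE ?ltnn.
Qed.

Lemma mS_card t : (mS t < #|S|)%N.
Proof.
apply: proper_card; apply/fintype.properP; split.
  by apply/fintype.subsetP => x.
by exists t; rewrite !inE ?ltnn.
Qed.

Lemma itv_zero q rw : dag q -> forall h t, (mS t < h)%N -> itv q rw h t = 0.
Proof.
move=> dq; elim=> [//|h IH] t Hm.
rewrite /itv iterS /step_expect big1 // => a _.
rewrite big1 ?mulr0 // => t' _.
case: (eqVneq (q t a t') 0) => [->|nz]; first by rewrite mul0r.
rewrite [iter _ _ _ _]IH ?mulr0 //.
exact: leq_trans (mS_lt (dq _ _ _ nz)) Hm.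
Qed.

Lemma itv_zeroN q rw t : dag q -> itv q rw #|S| t = 0.
Proof. by move=> dq; apply: itv_zero => //; exact: mS_card. Qed.

Lemma value_fin q rw t : dag q -> value gamma pi q rw t = vfn q rw t.
Proof.
move=> dq; rewrite /value; apply: lim_near_cst => //.
exists #|S| => // n /= hn.
rewrite /series /= (big_cat_nat (n:=#|S|)) //= big_mkord.
rewrite [X in _ + X]big1_seq ?addr0 // => k /andP[_].
rewrite mem_index_iota => /andP[Sk _].
by rewrite [iter _ _ _ _](@itv_zero q rw dq) ?mulr0 // (leq_trans (mS_card t)).
Qed.

Lemma step_expect_add q F G t :
  step_expect pi q (fun t' => F t' + G t') t = step_expect pi q F t + step_expect pi q G t.
Proof.
rewrite /step_expect -big_split; apply: eq_bigr => a _ /=.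
rewrite -mulrDr -big_split; congr (_ * _); apply: eq_bigr => t' _ /=; ring.
Qed.

Lemma step_expect_scale q c F t :
  step_expect pi q (fun t' => c * F t') t = c * step_expect pi q F t.
Proof.
rewrite /step_expect big_distrr; apply: eq_bigr => a _ /=.
rewrite [RHS]mulrCA; congr (_ * _); rewrite big_distrr.
by apply: eq_bigr => t' _ /=; ring.
Qed.

Lemma step_expect_sum (I : Type) (s : seq I) q (F : I -> S -> R) t :
  step_expect pi q (fun t' => \sum_(i <- s) F i t') t =
  \sum_(i <- s) step_expect pi q (F i) t.
Proof.
elim: s => [|i s IH].
  rewrite big_nil /step_expect big1 // => a _.
  by rewrite big1 ?mulr0 // => t' _; rewrite big_nil mulr0.
rewrite big_cons -IH -step_expect_add.
by congr step_expect; apply: funext => t'; rewrite big_cons.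
Qed.

Lemma bellman q rw t : dag q ->
  vfn q rw t = pol_reward pi rw t + gamma * step_expect pi q (vfn q rw) t.
Proof.
move=> dq; rewrite /vfn step_expect_sum.
under [X in _ = _ + _ * X]eq_bigr do rewrite step_expect_scale.
rewrite big_distrr /=.
have -> : pol_reward pi rw t = gamma ^+ 0 * itv q rw 0 t by rewrite expr0 mul1r.
rewrite (_ : \sum_(i < #|S|) gamma * (gamma ^+ i * step_expect pi q (itv q rw i) t) =
    \sum_(i < #|S|) gamma ^+ (bump 0 i) * itv q rw (bump 0 i) t); last first.
  by apply: eq_bigr => i _; rewrite /bump /= add1n exprS mulrA.
rewrite -(big_ord_recl #|S| (fun i : 'I_(#|S|).+1 => gamma ^+ i * itv q rw i t)).
by rewrite big_ord_recr /= itv_zeroN // mulr0 addr0.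
Qed.

Lemma itv_agree q q' rw rw' : dag q -> forall h t,
  (forall t0 a s', (rank t <= rank t0)%N -> q t0 a s' = q' t0 a s') ->
  (forall t0 a, (rank t <= rank t0)%N -> rw t0 a = rw' t0 a) ->
  itv q rw h t = itv q' rw' h t.
Proof.
move=> dq; elim=> [|h IH] t Hq Hr.
  by rewrite /itv /= /pol_reward; apply: eq_bigr => a _; rewrite Hr.
rewrite /itv !iterS /step_expect; apply: eq_bigr => a _; congr (_ * _).
apply: eq_bigr => t' _; rewrite -Hq //.
case: (eqVneq (q t a t') 0) => [->|nz]; first by rewrite !mul0r.
have tt' := dq _ _ _ nz.
congr (_ * _); apply: IH.
  by move=> t0 a0 s' h0; apply: Hq; exact: leq_trans (ltnW tt') h0.
by move=> t0 a0 h0; apply: Hr; exact: leq_trans (ltnW tt') h0.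
Qed.

End MDP.
Section Main.
Context {R : realType} {S A : finType} {d : measure_display}
  {Omega : measurableType d} (P : probability Omega R).
Variables (gamma : R) (pi : S -> A -> R) (p : Omega -> S -> A -> S -> R)
  (r : Omega -> S -> A -> R) (rank : S -> nat) (M : R).
Hypotheses (hp0 : forall w s a s', 0 <= p w s a s')
  (hp1 : forall w s a, \sum_(s' : S) p w s a s' <= 1)
  (mp : forall s a s', measurable_fun setT (fun w => p w s a s'))
  (mr : forall s a, measurable_fun setT (fun w => r w s a))
  (hM : forall w s a, `|r w s a| <= M)
  (hind : indep_blocks P p r)
  (hrank : forall w s a s', p w s a s' != 0 -> (rank s < rank s')%N).

Definition Kt := ((S * A * S) + (S * A))%type.
Definition Zm (w : Omega) (k : Kt) : R :=
  match k with inl (s, a, s') => p w s a s' | inr (s, a) => r w s a end.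
Definition pz (z : Kt -> R) : S -> A -> S -> R := fun s a s' => z (inl (s, a, s')).
Definition rz (z : Kt -> R) : S -> A -> R := fun s a => z (inr (s, a)).
Definition blk (k : Kt) : S := match k with inl (s, _, _) => s | inr (s, _) => s end.
Definition Cb : R := 1 + `|M|.

Lemma Cb0 : 0 < Cb.
Proof. by rewrite /Cb; apply: ltr_wpDr. Qed.

Lemma p_le1 w s a s' : p w s a s' <= 1.
Proof.
apply: le_trans (hp1 w s a); rewrite (bigD1 s') //= lerDl.
by apply: sumr_ge0 => i _.
Qed.

Lemma Zbox w k : `|Zm w k| <= Cb.
Proof.
case: k => [[[s a] s']|[s a]] /=.
  rewrite ger0_norm // (le_trans (p_le1 _ _ _ _)) // /Cb lerDl //.
by rewrite (le_trans (hM _ _ _)) // /Cb (le_trans (ler_norm M)) // lerDr.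
Qed.

Lemma mZ k : measurable_fun setT (fun w => Zm w k).
Proof. by case: k => [[[s a] s']|[s a]] /=. Qed.

Lemma dagw w : dag rank (p w).
Proof. by move=> s a s'; exact: hrank. Qed.

Local Notation PO := (@Poly _ _ Omega Kt Cb).

Lemma PO_bm (Q : pred Kt) f : PO Q f -> bm (fun w => f (Zm w)).
Proof.
move=> [Lf mf]; split; first by apply: mf; exact: mZ.
have [B [_ hB]] := Lip_bound Cb0 Lf.
by exists B => w; apply: hB => k; exact: Zbox.
Qed.

Lemma PO_itv h t : PO predT (fun z => itv pi (pz z) (rz z) h t).
Proof.
elim: h t => [|h IH] t.
  rewrite /itv /= /pol_reward; apply: Poly_sum => a.
  by apply: (Poly_mul Cb0); [exact: Poly_cst | exact: Poly_coord].
rewrite /itv /=; apply: Poly_sum => a; apply: (Poly_mul Cb0); first exact: Poly_cst.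
apply: Poly_sum => t'; apply: (Poly_mul Cb0); first exact: Poly_coord.
exact: IH.
Qed.

Lemma PO_vfn t : PO predT (fun z => vfn gamma pi (pz z) (rz z) t).
Proof.
rewrite /vfn; apply: Poly_sum => h; apply: (Poly_mul Cb0); first exact: Poly_cst.
exact: PO_itv.
Qed.

Definition hi (s : S) (k : Kt) : bool := (rank s < rank (blk k))%N.

Definition vtr (s t : S) (z : Kt -> R) : R :=
  vfn gamma pi (pz (fun k => if hi s k then z k else 0))
               (rz (fun k => if hi s k then z k else 0)) t.

Lemma PO_vtr s t : PO (hi s) (vtr s t).
Proof. exact: (Poly_trunc Cb0 (hi s) (PO_vfn t)). Qed.

Lemma V_eq w t : value gamma pi (p w) (r w) t = vfn gamma pi (pz (Zm w)) (rz (Zm w)) t.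
Proof. rewrite (value_fin gamma pi (r w) t (@dagw w)); reflexivity. Qed.

Lemma vtr_eq s t w : (rank s < rank t)%N -> vtr s t (Zm w) = value gamma pi (p w) (r w) t.
Proof.
move=> st; rewrite V_eq /vtr /vfn; apply: eq_bigr => h _; congr (_ * _).
symmetry; apply: (itv_agree pi (@dagw w)).
  move=> t0 a s' h0; rewrite /pz /hi /=.
  by rewrite (leq_trans st h0).
move=> t0 a h0; rewrite /rz /hi /=.
by rewrite (leq_trans st h0).
Qed.

Definition ev (E : Kt -> set R) : set Omega := [set w | forall k, E k (Zm w k)].
Definition tev (E : Kt -> set R) s := trans_event p (fun s0 a s' => E (inl (s0, a, s'))) s.
Definition rev (E : Kt -> set R) s := rew_event r (fun s0 a => E (inr (s0, a))) s.

Lemma tev_meas (E : Kt -> set R) s : (forall k, measurable (E k)) -> measurable (tev E s).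
Proof.
move=> mE.
rewrite (_ : tev E s = evD Zm (fun k => match k with inl (s0, _, _) => s0 == s | inr _ => false end) E).
  exact: (evD_meas mZ).
apply/seteqP; split => w /=.
  by move=> H [[[s0 a] s']|[s0 a]] //= /eqP ->; exact: H.
by move=> H a s'; apply: (H (inl (s, a, s'))) => /=.
Qed.

Lemma rev_meas (E : Kt -> set R) s : (forall k, measurable (E k)) -> measurable (rev E s).
Proof.
move=> mE.
rewrite (_ : rev E s = evD Zm (fun k => match k with inr (s0, _) => s0 == s | inl _ => false end) E).
  exact: (evD_meas mZ).
apply/seteqP; split => w /=.
  by move=> H [[[s0 a] s']|[s0 a]] //= /eqP ->; exact: H.
by move=> H a; apply: (H (inr (s, a))) => /=.
Qed.

Lemma fine_prod (I : Type) (l : seq I) (F : I -> \bar R) :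
  (forall i, F i \is a fin_num) -> fine (\prod_(i <- l) F i)%E = \prod_(i <- l) fine (F i).
Proof.
move=> hF; rewrite (eq_bigr (fun i => (fine (F i))%:E)); last by move=> i _; rewrite fineK.
by rewrite prodEFin.
Qed.

Lemma PsetT (X : set Omega) : X = setT -> fine (P X) = 1.
Proof. by move=> ->; rewrite probability_setT. Qed.

Lemma ev_prod (E : Kt -> set R) : (forall k, measurable (E k)) ->
  fine (P (ev E)) = \prod_(s : S) (fine (P (tev E s)) * fine (P (rev E s))).
Proof.
move=> mE.
have := hind; rewrite /indep_blocks.
move=> /(_ (fun s a s' => E (inl (s, a, s'))) (fun s a => E (inr (s, a)))).
move=> /(_ (fun s a s' => mE (inl (s, a, s'))) (fun s a => mE (inr (s, a)))).
rewrite (_ : [set w | _] = ev E); last first.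
  apply/seteqP; split => w /=.
    by move=> H [[[s a] s']|[s a]] /=; [exact: (H s).1 a s' | exact: (H s).2 a].
  by move=> H s; split => [a s'|a]; [exact: (H (inl (s, a, s'))) | exact: (H (inr (s, a)))].
move=> ->; rewrite fine_prod; last first.
  move=> s; apply: fin_numM; apply: fin_num_measure; [exact: tev_meas | exact: rev_meas].
apply: eq_bigr => s _; rewrite fineM //; apply: fin_num_measure; [exact: tev_meas | exact: rev_meas].
Qed.

Definition Dof (Dp Dr : pred S) (k : Kt) : bool :=
  match k with inl (s, _, _) => Dp s | inr (s, _) => Dr s end.

Lemma indep_gen (Dp Dr : pred S) (B B' : Kt -> set R) :
  (forall k, measurable (B k)) -> (forall k, measurable (B' k)) ->
  fine (P (evD Zm (Dof Dp Dr) B `&` evD Zm (predC (Dof Dp Dr)) B')) =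
  fine (P (evD Zm (Dof Dp Dr) B)) * fine (P (evD Zm (predC (Dof Dp Dr)) B')).
Proof.
move=> mB mB'.
pose E12 := fun k => if Dof Dp Dr k then B k else B' k.
pose E1 := fun k => if Dof Dp Dr k then B k else setT.
pose E2 := fun k => if Dof Dp Dr k then setT else B' k.
have mE12 : forall k, measurable (E12 k) by move=> k; rewrite /E12; case: ifP.
have mE1 : forall k, measurable (E1 k) by move=> k; rewrite /E1; case: ifP.
have mE2 : forall k, measurable (E2 k) by move=> k; rewrite /E2; case: ifP.
rewrite (_ : _ `&` _ = ev E12); last first.
  apply/seteqP; split => w /=.
    by move=> [H1 H2] k; rewrite /E12; case: ifP => Dk; [exact: H1 | apply: H2; rewrite /= Dk].
  move=> H; split => k Dk; have := H k; rewrite /E12.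
    by rewrite Dk.
  by move: Dk => /= /negbTE ->.
rewrite (_ : evD Zm _ B = ev E1); last first.
  apply/seteqP; split => w /=.
    by move=> H k; rewrite /E1; case: ifP => Dk //; exact: H.
  by move=> H k Dk; have := H k; rewrite /E1 Dk.
rewrite (_ : evD Zm _ B' = ev E2); last first.
  apply/seteqP; split => w /=.
    by move=> H k; rewrite /E2; case: ifP => Dk //; apply: H; rewrite /= Dk.
  by move=> H k Dk; have := H k; rewrite /E2; move: Dk => /= /negbTE ->.
rewrite !ev_prod // -big_split /=; apply: eq_bigr => s _.
have t12 : fine (P (tev E12 s)) = fine (P (tev E1 s)) * fine (P (tev E2 s)).
  case: (boolP (Dp s)) => Ds.
    rewrite [fine (P (tev E2 s))]PsetT ?mulr1; last first.
      apply/seteqP; split => w //= _ a s'; rewrite /E2 /Dof /=; destruct (Dp s); [exact I | discriminate].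
    rewrite /tev /trans_event /E12 /E1 /Dof /=; destruct (Dp s); [reflexivity | discriminate].
  rewrite [fine (P (tev E1 s))]PsetT ?mul1r; last first.
    apply/seteqP; split => w //= _ a s'; rewrite /E1 /Dof /=; destruct (Dp s); [discriminate | exact I].
  rewrite /tev /trans_event /E12 /E2 /Dof /=; destruct (Dp s); [discriminate | reflexivity].
have r12 : fine (P (rev E12 s)) = fine (P (rev E1 s)) * fine (P (rev E2 s)).
  case: (boolP (Dr s)) => Ds.
    rewrite [fine (P (rev E2 s))]PsetT ?mulr1; last first.
      apply/seteqP; split => w //= _ a; rewrite /E2 /Dof /=; destruct (Dr s); [exact I | discriminate].
    rewrite /rev /rew_event /E12 /E1 /Dof /=; destruct (Dr s); [reflexivity | discriminate].
  rewrite [fine (P (rev E1 s))]PsetT ?mul1r; last first.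
    apply/seteqP; split => w //= _ a; rewrite /E1 /Dof /=; destruct (Dr s); [discriminate | exact I].
  rewrite /rev /rew_event /E12 /E2 /Dof /=; destruct (Dr s); [discriminate | reflexivity].
by rewrite t12 r12; ring.
Qed.


Local Notation Vv w t := (value gamma pi (p w) (r w) t).

Lemma bm_V t : bm (fun w => Vv w t).
Proof.
have -> : (fun w => Vv w t) = (fun w => vfn gamma pi (pz (Zm w)) (rz (Zm w)) t).
  by apply: funext => w; exact: V_eq.
exact: PO_bm (PO_vfn t).
Qed.

Lemma bm_p s a t : bm (fun w => p w s a t).
Proof.
apply: (@PO_bm predT (fun z => z (inl (s, a, t)))); exact: Poly_coord.
Qed.

Lemma bm_r s a : bm (fun w => r w s a).
Proof.
apply: (@PO_bm predT (fun z => z (inr (s, a)))); exact: Poly_coord.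
Qed.

Lemma KPL_s (Dp Dr : pred S) f g :
  PO (Dof Dp Dr) f -> PO (predC (Dof Dp Dr)) g ->
  Ex P (fun w => f (Zm w) * g (Zm w)) = Ex P (fun w => f (Zm w)) * Ex P (fun w => g (Zm w)).
Proof.
move=> [Lf mf] [Lg mg].
apply: (KPL Cb0 Zbox mZ (@indep_gen Dp Dr)) => //; [exact: mf mZ | exact: mg mZ].
Qed.

Lemma p_zero s a t : (rank t <= rank s)%N -> forall w, p w s a t = 0.
Proof.
move=> ts w; apply/eqP/negPn/negP => nz.
by have := hrank nz; rewrite ltnNge ts.
Qed.

Lemma hi_notD s k : hi s k -> predC (Dof (pred1 s) pred0) k.
Proof.
case: k => [[[s0 a0] s1]|[s0 a0]] //=; rewrite /hi /=.
by move=> h; apply/negP => /eqP e; move: h; rewrite e ltnn.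
Qed.

Lemma F12 s a t (n : nat) :
  Ex P (fun w => p w s a t * Vv w t ^+ n) =
  Ex P (fun w => p w s a t) * Ex P (fun w => Vv w t ^+ n).
Proof.
case: (ltnP (rank s) (rank t)) => st; last first.
  have p0 : forall w, p w s a t = 0 := fun w => @p_zero s a t st w.
  under eq_Ex do rewrite p0 mul0r.
  under [Ex P (fun w => p w s a t)]eq_Ex do rewrite p0.
  by rewrite Ex_cst mul0r.
have PV : forall m, PO (hi s) (fun z => vtr s t z ^+ m).
  elim=> [|m IH].
    by under eq_fun do rewrite expr0; exact: Poly_cst.
  by under eq_fun do rewrite exprS; exact: (Poly_mul Cb0) (PO_vtr s t) IH.
have := @KPL_s (pred1 s) pred0 (fun z => z (inl (s, a, t))) (fun z => vtr s t z ^+ n).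
move=> /(_ (Poly_coord _ _)) /(_ (Poly_weaken (@hi_notD s) (PV n))).
rewrite /= eqxx => /(_ isT).
have eV : forall w, vtr s t (Zm w) ^+ n = Vv w t ^+ n by move=> w; rewrite vtr_eq.
under eq_Ex do rewrite eV.
by under [X in _ = _ * X]eq_Ex do rewrite eV.
Qed.

Lemma F3 s a t :
  Ex P (fun w => pol_reward pi (r w) s * (p w s a t * Vv w t)) =
  Ex P (fun w => pol_reward pi (r w) s) * Ex P (fun w => p w s a t * Vv w t).
Proof.
case: (ltnP (rank s) (rank t)) => st; last first.
  have p0 : forall w, p w s a t = 0 := fun w => @p_zero s a t st w.
  under eq_Ex do rewrite p0 mul0r mulr0.
  under [Ex P (fun w => p w s a t * _)]eq_Ex do rewrite p0 mul0r.
  by rewrite Ex_cst mulr0.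
have PR : PO (Dof pred0 (pred1 s)) (fun z => pol_reward pi (rz z) s).
  rewrite /pol_reward; apply: Poly_sum => a0; apply: (Poly_mul Cb0); first exact: Poly_cst.
  by apply: Poly_coord => /=.
have PG : PO (predC (Dof pred0 (pred1 s))) (fun z => z (inl (s, a, t)) * vtr s t z).
  apply: (Poly_mul Cb0); first exact: Poly_coord.
  apply: Poly_weaken (PO_vtr s t) => -[[[s0 a0] s1]|[s0 a0]] //=; rewrite /hi /=.
  by move=> h; apply/negP => /eqP e; move: h; rewrite e ltnn.
have := KPL_s PR PG.
have eV : forall w, Zm w (inl (s, a, t)) * vtr s t (Zm w) = p w s a t * Vv w t.
  by move=> w; rewrite vtr_eq.
under eq_Ex do rewrite eV.
by under [X in _ = _ * X]eq_Ex do rewrite eV.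
Qed.


Lemma F1 s a t :
  Ex P (fun w => p w s a t * Vv w t) =
  Ex P (fun w => p w s a t) * Ex P (fun w => Vv w t).
Proof.
have := F12 s a t 1; under eq_Ex do rewrite expr1.
by under [X in _ = _ * X -> _]eq_Ex do rewrite expr1.
Qed.

Lemma Ex_step s (F : A -> S -> Omega -> R) :
  (forall a t, bm (F a t)) ->
  Ex P (fun w => \sum_(a : A) pi s a * \sum_(t : S) F a t w) =
  \sum_(a : A) pi s a * \sum_(t : S) Ex P (F a t).
Proof.
move=> hF; rewrite Ex_sum; last first.
  by move=> a; apply: bmM; [exact: bm_cst | exact: bm_sum].
apply: eq_bigr => a _; rewrite ExZ ?Ex_sum //; exact: bm_sum.
Qed.

Lemma bm_RR s : bm (fun w => pol_reward pi (r w) s).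
Proof. apply: bm_sum => a; apply: bmM; [exact: bm_cst | exact: bm_r]. Qed.

Lemma bm_step s (F : A -> S -> Omega -> R) : (forall a t, bm (F a t)) ->
  bm (fun w => \sum_(a : A) pi s a * \sum_(t : S) F a t w).
Proof. by move=> hF; apply: bm_sum => a; apply: bmM; [exact: bm_cst | exact: bm_sum]. Qed.

Lemma main_eq s :
  let V := fun w => value gamma pi (p w) (r w) in
  let pbar := fun s a s' => fine ('E_P[fun w => p w s a s'])%E in
  let Vbar := fun s => fine ('E_P[fun w => V w s])%E in
  let U := fun s => ('V_P[fun w => V w s])%E in
  let u := fun s =>
    ((step_var pi pbar Vbar s)%:E
       - 'E_P[fun w => step_var pi (p w) (V w) s])%E in
    U s = ('V_P[fun w => pol_reward pi (r w) s]
           + (gamma ^+ 2)%:E * u s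
           + (gamma ^+ 2)%:E *
               \sum_(a : A) \sum_(s' : S) (pi s a * pbar s a s')%:E * U s')%E.
Proof.
move=> V pbar Vbar U u.
have ep : pbar = (fun s a s' => Ex P (fun w => p w s a s')).
  apply: funext => s0; apply: funext => a; apply: funext => s'.
  by rewrite /pbar expectation_Ex //; exact: bm_p.
have ev : Vbar = (fun t => Ex P (fun w => Vv w t)).
  by apply: funext => t; rewrite /Vbar expectation_Ex //; exact: bm_V.
have eU : forall t, U t = (Ex P (fun w => Vv w t ^+ 2) - Ex P (fun w => Vv w t) ^+ 2)%:E.
  by move=> t; rewrite /U variance_Ex //; exact: bm_V.
rewrite /u ep ev !eU.
pose RR w := pol_reward pi (r w) s.
pose XX w := step_expect pi (p w) (V w) s.
have bRR : bm RR by exact: bm_RR.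
have bXX : bm XX.
  by apply: bm_step => a t; apply: bmM; [exact: bm_p | exact: bm_V].
have bell : forall w, Vv w s = RR w + gamma * XX w.
  move=> w; rewrite (value_fin gamma pi (r w) s (@dagw w)) (bellman _ _ _ _ (@dagw w)).
  congr (_ + gamma * _); rewrite /XX; congr step_expect.
  by apply: funext => t; rewrite /V (value_fin gamma pi (r w) t (@dagw w)).
have bV2 : forall t, bm (fun w => Vv w t ^+ 2) by move=> t; apply: bmM; exact: bm_V.
rewrite variance_Ex; last exact: bm_RR.
have estep : 'E_P[fun w => step_var pi (p w) (V w) s]%E =
   (\sum_(a : A) pi s a * \sum_(t : S) (Ex P (fun w => p w s a t) * Ex P (fun w => Vv w t ^+ 2))
     - Ex P (fun w => XX w ^+ 2))%:E.
  rewrite expectation_Ex; last first.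
    rewrite /step_var; apply: bmB; last by apply: bmM.
    by apply: bm_step => a t; apply: bmM; [exact: bm_p | exact: bV2].
  congr (_%:E); rewrite /step_var ExB; last first.
  - by apply: bmM.
  - by apply: bm_step => a t; apply: bmM; [exact: bm_p | exact: bV2].
  congr (_ - _); rewrite /step_expect Ex_step; last first.
    by move=> a t; apply: bmM; [exact: bm_p | exact: bV2].
  apply: eq_bigr => a _; congr (_ * _); apply: eq_bigr => t _.
  exact: (F12 s a t 2).
rewrite estep.
have eS : (\sum_(a : A) \sum_(s' : S) ((pi s a * Ex P (fun w => p w s a s'))%:E * U s'))%E =
   (\sum_(a : A) \sum_(t : S) (pi s a * Ex P (fun w => p w s a t) *
   (Ex P (fun w => Vv w t ^+ 2) - Ex P (fun w => Vv w t) ^+ 2)))%:E.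
  rewrite -sumEFin; apply: eq_bigr => a _; rewrite -sumEFin; apply: eq_bigr => t _.
  by rewrite eU -EFinM.
rewrite eS.
rewrite -!EFinM -!EFinD; congr (_%:E).
have EX : Ex P XX = \sum_(a : A) pi s a * \sum_(t : S)
    (Ex P (fun w => p w s a t) * Ex P (fun w => Vv w t)).
  rewrite /XX /step_expect Ex_step; last first.
    by move=> a t; apply: bmM; [exact: bm_p | exact: bm_V].
  apply: eq_bigr => a _; congr (_ * _); apply: eq_bigr => t _.
  exact: F1.
have ERX : Ex P (fun w => RR w * XX w) = Ex P RR * Ex P XX.
  rewrite EX big_distrr /=.
  rewrite (@eq_Ex _ _ _ P _ (fun w => \sum_(a : A) pi s a * \sum_(t : S) RR w * (p w s a t * Vv w t))); last first.
    move=> w; rewrite /XX /step_expect big_distrr; apply: eq_bigr => a _ /=.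
    by rewrite mulrCA big_distrr.
  rewrite Ex_step; last first.
    by move=> a t; apply: bmM => //; apply: bmM; [exact: bm_p | exact: bm_V].
  apply: eq_bigr => a _ /=.
  rewrite [RHS]mulrCA; congr (_ * _); rewrite big_distrr; apply: eq_bigr => t _ /=.
  by rewrite F3 F1.
have EV : Ex P (fun w => Vv w s) = Ex P RR + gamma * Ex P XX.
  by rewrite (eq_Ex _ bell) ExD ?ExZ //; apply: bmM => //; exact: bm_cst.
have EV2 : Ex P (fun w => Vv w s ^+ 2) =
    Ex P (fun w => RR w ^+ 2) + 2 * gamma * Ex P (fun w => RR w * XX w)
    + gamma ^+ 2 * Ex P (fun w => XX w ^+ 2).
  have bRX : bm (fun w => RR w * XX w) by apply: bmM.
  have bR2 : bm (fun w => RR w ^+ 2) by apply: bmM.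
  have bX2 : bm (fun w => XX w ^+ 2) by apply: bmM.
  rewrite (@eq_Ex _ _ _ P _ (fun w => RR w ^+ 2 + (2 * gamma * (RR w * XX w) +
     gamma ^+ 2 * XX w ^+ 2))); last by move=> w; rewrite bell; ring.
  rewrite ExD //; last by apply: bmD; apply: bmM => //; exact: bm_cst.
  rewrite ExD; [|apply: bmM => //; exact: bm_cst|apply: bmM => //; exact: bm_cst].
  by rewrite !ExZ //; ring.
have Esum : \sum_(a : A) \sum_(t : S) pi s a * Ex P (fun w => p w s a t) *
      (Ex P (fun w => Vv w t ^+ 2) - Ex P (fun w => Vv w t) ^+ 2) =
    \sum_(a : A) pi s a * \sum_(t : S) (Ex P (fun w => p w s a t) * Ex P (fun w => Vv w t ^+ 2))
    - \sum_(a : A) pi s a * \sum_(t : S) (Ex P (fun w => p w s a t) * Ex P (fun w => Vv w t) ^+ 2).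
  rewrite -sumrB; apply: eq_bigr => a _.
  rewrite -mulrBr -sumrB big_distrr; apply: eq_bigr => t _ /=; ring.
rewrite Esum EV2 EV ERX /step_var /step_expect -EX.
ring.
Qed.

End Main.

Unset Implicit Arguments. Set Strict Implicit.

Theorem theorem3 (R : realType) (S A : finType)
  (d : measure_display) (Omega : measurableType d) (P : probability Omega R)
  (gamma : R) (pi : S -> A -> R)
  (p : Omega -> S -> A -> S -> R) (r : Omega -> S -> A -> R) :
  0 <= gamma < 1 ->
  (forall s a, 0 <= pi s a) -> (forall s, \sum_(a : A) pi s a = 1) ->
  (* p(.|s,a) is a (sub-)probability vector; missing mass = episode end *)
  (forall w s a s', 0 <= p w s a s') ->
  (forall w s a, \sum_(s' : S) p w s a s' <= 1) ->
  (forall s a s', measurable_fun setT (fun w => p w s a s')) ->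
  (forall s a, measurable_fun setT (fun w => r w s a)) ->
  (exists M : R, forall w s a, `|r w s a| <= M) ->
  (* (A1),(A3),(A4): independence *)
  indep_blocks P p r ->
  (* (A2): the MDP is a DAG (fixed topological order) *)
  (exists rank : S -> nat,
      forall w s a s', p w s a s' != 0 -> (rank s < rank s')%N) ->
  let V := fun w => value gamma pi (p w) (r w) in
  let pbar := fun s a s' => fine ('E_P[fun w => p w s a s'])%E in
  let Vbar := fun s => fine ('E_P[fun w => V w s])%E in
  let U := fun s => ('V_P[fun w => V w s])%E in
  let u := fun s =>
    ((step_var pi pbar Vbar s)%:E
       - 'E_P[fun w => step_var pi (p w) (V w) s])%E in
  forall s : S,
    U s = ('V_P[fun w => pol_reward pi (r w) s]
           + (gamma ^+ 2)%:E * u s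
           + (gamma ^+ 2)%:E *
               \sum_(a : A) \sum_(s' : S) (pi s a * pbar s a s')%:E * U s')%E.
Proof.
move=> _ _ _ hp0 hp1 mp mr [M hM] hind [rank hrank] V pbar Vbar U u s.
exact (main_eq gamma pi hp0 hp1 mp mr hM hind hrank s).
Qed.

Print Assumptions theorem3.
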